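(* Let $G$ be a finite abelian $2$-group of order $2^n$, $n\geq 3$, which is not elementary abelian. Then for every $0\leq k\leq n$, $$s_k(G)\leq s_k(D_8\times C_2^{n-3}).$$
   Context: For a finite $2$-group $G$ of order $2^n$ and $0\le k\le n$, $s_k(G)$ denotes the number of subgroups of $G$ of order $2^k$. $D_8$ is the dihedral group of order $8$ and $C_2^{m}$ is the elementary abelian $2$-group of order $2^m$. *)

(* Defs.v *)
From mathcomp Require Import all_boot all_algebra all_fingroup all_solvable.
Set Implicit Arguments. Unset Strict Implicit. Unset Printing Implicit Defensive.

Definition s_ (gT : finGroupType) (G : {set gT}) (k : nat) : nat :=
  #|[set H : {group gT} | (H \subset G) && (#|H| == 2 ^ k)]|.

(* The group type D_8 x C_2^m: 'D_8 is MathComp's dihedral group of order 8,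
   'rV['Z_2]_m is the additive group (Z/2)^m, i.e. elementary abelian of order 2^m. *)
Definition D8xC2_type (m : nat) : finGroupType := ('D_8 * 'rV['Z_2]_m)%type.
Definition D8xC2 (m : nat) : {group D8xC2_type m} := [set: D8xC2_type m]%G.

(* Main.v *)
Require Import Defs.
From mathcomp Require Import all_boot all_algebra all_fingroup all_solvable zify.
Set Implicit Arguments. Unset Strict Implicit. Unset Printing Implicit Defensive.

Lemma card_fibers_le (T U : finType) (A : {set T}) (B : {set U}) (f : T -> U) (c : nat) :
  {in A, forall x, f x \in B} ->
  {in B, forall y, #|[set x in A | f x == y]| <= c} -> #|A| <= c * #|B|.
Proof.
move=> fAB fib.
rewrite -sum1_card (partition_big f (mem B)) //= mulnC -sum_nat_const.
apply: leq_sum => y By; apply: leq_trans (fib y By).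
by rewrite sum1_card cardsE.
Qed.


Fixpoint gb (m k : nat) : nat :=
  match m, k with
  | 0, 0 => 1
  | 0, _.+1 => 0
  | m'.+1, 0 => 1
  | m'.+1, k'.+1 => gb m' k' + 2 ^ k'.+1 * gb m' k'.+1
  end.

Lemma gb_small m k : m < k -> gb m k = 0.
Proof.
elim: m k => [|m IH] [|k] //= lt; rewrite !IH ?muln0 //; exact: ltnW.
Qed.

Lemma gb_0 m : gb m 0 = 1. Proof. by case: m. Qed.

Lemma gb_1 m : gb m 1 = 2 ^ m - 1.
Proof.
elim: m => [|m IH] //=; rewrite IH gb_0 expn1 expnS.
have := expn_gt0 2 m; lia.
Qed.

Lemma gb_pascal2 m k : gb m.+1 k.+1 = gb m k.+1 + 2 ^ (m - k) * gb m k.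
Proof.
elim: m k => [|m IH] [|k].
- by [].
- by rewrite /= !muln0.
- rewrite !gb_1 gb_0 subn0 muln1 !expnS; have := expn_gt0 2 m; lia.
rewrite [in RHS](_ : gb m.+1 k.+2 = gb m k.+1 + 2 ^ k.+2 * gb m k.+2) //.
rewrite [in RHS](_ : gb m.+1 k.+1 = gb m k + 2 ^ k.+1 * gb m k.+1) // subSS.
rewrite (_ : gb m.+2 k.+2 = gb m.+1 k.+1 + 2 ^ k.+2 * gb m.+1 k.+2) // (IH k) (IH k.+1).
case: (ltnP k m) => [lt | le].
  have e1 : 2 ^ k.+2 * (2 ^ (m - k.+1)) = 2 ^ m.+1.
    by rewrite -expnD; congr (2 ^ _); lia.
  have e2 : 2 ^ (m - k) * 2 ^ k.+1 = 2 ^ m.+1.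
    by rewrite -expnD; congr (2 ^ _); lia.
  rewrite !mulnDr !mulnA e1 e2; lia.
rewrite (gb_small (m:=m) (k:=k.+1)) ?ltnS // ?(gb_small (m:=m) (k:=k.+2)) //.
  rewrite !muln0 !addn0 !add0n; lia.
by apply: leq_trans le _.
Qed.

Local Open Scope group_scope.

Lemma card_fibers_ge (T U : finType) (A : {set T}) (B : {set U}) (f : T -> U) (c : nat) :
  {in B, forall y, c <= #|[set x in A | f x == y]|} -> c * #|B| <= #|A|.
Proof.
move=> fib.
rewrite -[#|A|]sum1_card (partition_big f predT) //= mulnC -sum_nat_const.
apply: leq_trans (_ : \sum_(y in B) #|[set x in A | f x == y]| <= _).
  by apply: leq_sum => y By; apply: fib.
rewrite [X in _ <= X](bigID (mem B)) /= (leq_trans _ (leq_addr _ _)) //.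
by apply: leq_sum => y _; rewrite sum1_card cardsE.
Qed.

Lemma card_Ohm1_cyclic2 (gT : finGroupType) (N : {group gT}) :
  cyclic N -> 2.-group N -> #|'Ohm_1(N)%g| <= 2.
Proof.
move=> cycN pN; have [-> | ntN] := eqVneq N 1%G.
  by rewrite Ohm1 cards1.
by rewrite (Ohm1_cyclic_pgroup_prime cycN pN ntN).
Qed.

Lemma compl_bound (gT : finGroupType) (X N : {group gT}) :
  abelian X -> 2.-group X -> N \subset X -> cyclic N ->
  #|[set H : {group gT} | [&& H \subset X, H :&: N == 1%g & (H * N == X)%g]]|
     <= #|X : N|%g.
Proof.
move=> abX pX sNX cycN.
have [c] := ubnP #|X|; elim: c X abX pX sNX => // c IH X abX pX sNX ltXc.
have [eqNX | [M maxM sNM]] := maximal_exists sNX.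
  rewrite eqNX indexgg.
  rewrite (leq_trans (subset_leq_card (_ : _ \subset [set 1%G]))) ?cards1 //.
  apply/subsetP => H; rewrite !inE => /and3P[sHX /eqP tiHN _].
  apply/eqP/group_inj => /=; rewrite -tiHN.
  by apply/esym/setIidPl.
have prMX : M \proper X := maxgroupp maxM.
have sMX : M \subset X := proper_sub prMX.
have iXM : #|X : M|%g = 2 := p_maximal_index pX maxM.
have [_ [x Xx notMx]] := properP prMX.
have pN : 2.-group N := pgroupS sNX pX.
have cXX : {in X &, forall u v, commute u v}.
  by move=> u v Xu Xv; apply: (centsP abX).
have sq : {in X, forall y, (y ^+ 2)%g \in M}.
  move=> y Xy; case My: (y \in M); first by rewrite groupX.
  apply/negPn/negP => notMy2.
  have: (y ^+ 2)%g \in X :\: M by rewrite inE notMy2 groupX.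
  rewrite -(rcoset_index2 sMX iXM (_ : y \in X :\: M)) ?inE ?My ?Xy //.
  case/rcosetP => m Mm; rewrite expgS expg1 => /mulIg eq_ym.
  by rewrite eq_ym Mm in My.
set SX := [set H : {group gT} | _].
set SM := [set H : {group gT} | [&& H \subset M, H :&: N == 1%g & (H * N == M)%g]].
have IHM : #|SM| <= #|M : N|%g.
  apply: IH => //; first exact: abelianS sMX abX.
    exact: pgroupS sMX pX.
  exact: leq_trans (proper_card prMX) ltXc.
have f_in : {in SX, forall H, (H :&: M)%G \in SM}.
  move=> H; rewrite !inE => /and3P[sHX /eqP tiHN /eqP defX] /=.
  rewrite subsetIr /=; apply/andP; split.
    by apply/eqP/trivgP; rewrite -tiHN setSI ?subsetIl.
  by rewrite setIC group_modr // defX (setIidPl sMX).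
apply: (leq_trans (card_fibers_le (c:=2) f_in _)); last first.
  by rewrite -(Lagrange_index sMX sNM) iXM leq_mul2l IHM orbT.
move=> H1; rewrite inE => /and3P[sH1M /eqP tiH1N /eqP defM].
set Fb := [set H in SX | _].
set Y := [set y in (x *: N)%g | (y ^+ 2)%g \in H1].
have YX : {subset Y <= X}.
  move=> y; rewrite inE => /andP[/lcosetP[a Na ->] _].
  by rewrite groupM // (subsetP sNX).
have YnotM : {in Y, forall y, y \notin M}.
  move=> y; rewrite inE => /andP[/lcosetP[a Na ->] _].
  by rewrite groupMr // (subsetP sNM).
have cardY : #|Y| <= 2.
  have [y0 Yy0 | Y0] := pickP (mem Y); last first.
    by rewrite (eq_card0 Y0).
  apply: leq_trans (card_Ohm1_cyclic2 cycN pN).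
  rewrite -(card_lcoset 'Ohm_1(N) y0) subset_leq_card //.
  apply/subsetP => y Yy; apply/lcosetP; exists (y0^-1 * y)%g; last by rewrite mulKVg.
  rewrite (OhmEabelian pN) ?(abelianS (Ohm_sub _ _)) ?cyclic_abelian //.
  have Xa := YX y0 Yy0; have Xb := YX y Yy.
  move: Yy0 Yy => /setIdP[Ya H1a] /setIdP[Yb H1b].
  case/lcosetP: Ya => a Na def0; case/lcosetP: Yb => b Nb def1.
  have Nab : y0^-1 * y \in N by rewrite def0 def1 invMg -mulgA mulKg groupM ?groupV.
  apply/LdivP; split => //; rewrite expn1.
  apply/set1gP; rewrite -tiH1N inE (groupX _ Nab) andbT.
  rewrite expgMn; last by apply: cXX; rewrite ?groupV.
  by rewrite expgVn; apply: groupM; rewrite ?groupV.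
pose phi (H : {group gT}) := odflt 1 [pick y in H :&: Y].
have phiP : {in Fb, forall H, phi H \in H :&: Y}.
  move=> H /setIdP[SXH /eqP defH1].
  move: SXH; rewrite [_ \in SX]inE => /and3P[sHX /eqP tiHN /eqP defX].
  rewrite /phi; case: pickP => [y Hy | nopick]; first exact: Hy; exfalso.
  move: Xx; rewrite -defX => /mulsgP[h n Hh Nn defx].
  have Xh : h \in X := subsetP sHX h Hh.
  have Yh : h \in Y.
    rewrite inE; apply/andP; split.
      by apply/lcosetP; exists n^-1; rewrite ?groupV // defx mulgK.
    by rewrite -defH1 /= inE groupX // sq.
  by have := nopick h; rewrite inE Hh Yh.
have phi_inj : {in Fb &, injective phi}.
  suff defH : {in Fb, forall H : {group gT}, H :=: H1 <*> <[phi H]>}.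
    move=> H H' FH FH' eq; apply: group_inj.
    by rewrite (defH H FH) (defH H' FH') eq.
  move=> H FH; have /setIP[Hy Yy] := phiP H FH; move: (phi H) Hy Yy => y Hy Yy.
  move: FH; rewrite !inE => /andP[/and3P[sHX _ _] /eqP defH1].
  have HM : H :&: M = H1 by rewrite -defH1.
  apply/eqP; rewrite eqEsubset; apply/andP; split; last by rewrite join_subG cycle_subG Hy -HM subsetIl.
  apply/subsetP => h Hh; have Xh := subsetP sHX h Hh.
  case Mh: (h \in M).
    by rewrite (subsetP (joing_subl _ _)) // -HM inE Hh Mh.
  have: h \in X :\: M by rewrite inE Mh Xh.
  rewrite -(rcoset_index2 sMX iXM (_ : y \in X :\: M)) ?inE ?YnotM ?YX //.
  case/rcosetP => m Mm defh.
  rewrite defh groupM //; last by rewrite (subsetP (joing_subr _ _)) ?cycle_id.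
  rewrite (subsetP (joing_subl _ _)) // -HM inE Mm andbT.
  by rewrite -(mulgK y m) -defh groupM ?groupV.
rewrite -(card_in_imset phi_inj); apply: leq_trans cardY.
apply: subset_leq_card; apply/subsetP => _ /imsetP[H FH ->].
by have /setIP[_ ->] := phiP H FH.
Qed.

Lemma s_0 (gT : finGroupType) (X : {group gT}) : s_ X 0 = 1%N.
Proof.
rewrite /s_ -(cards1 (1%G : {group gT})); apply: eq_card => H.
rewrite !inE expn0; apply/andP/eqP => [[_ /eqP oH] | ->].
  by apply: group_inj; rewrite /= (card1_trivg oH).
by rewrite sub1G cards1.
Qed.

Lemma s_quotient (gT : finGroupType) (X N : {group gT}) j :
  N <| X -> s_ (X / N) j =
  #|[set L : {group gT} | [&& L \subset X, N \subset L & #|L| == (2 ^ j * #|N|)%N]]|.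
Proof.
move=> nsNX; have [sNX nNX] := andP nsNX.
set SL := [set L : {group gT} | _].
rewrite /s_.
have -> : [set K : {group coset_of N} | (K \subset X / N) && (#|K| == 2 ^ j)%N]
       = [set (L / N)%G | L in SL].
  apply/setP => K; rewrite inE; apply/andP/imsetP.
    case=> sKX /eqP oK; exists (coset N @*^-1 K)%G.
      rewrite inE /= sub_cosetpre_quo // sKX sub_cosetpre /=.
      by rewrite card_cosetpre oK mulnC.
    by apply: group_inj; rewrite /= cosetpreK.
  case=> L; rewrite inE => /and3P[sLX sNL /eqP oL] ->; split.
    exact: quotientS.
  rewrite /= card_quotient ?(subset_trans sLX nNX) // -divgS // oL.
  by rewrite mulnK ?cardG_gt0.
rewrite card_in_imset // => L1 L2; rewrite !inE => /and3P[sL1X sNL1 _] /and3P[sL2X sNL2 _].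
move/(congr1 val) => /= eqL; apply: group_inj.
by apply: (quotient_inj _ _ eqL); apply: normalS nsNX.
Qed.

Lemma c_bound (gT : finGroupType) (X N : {group gT}) k :
  abelian X -> 2.-group X -> N \subset X -> cyclic N ->
  #|[set H : {group gT} | [&& H \subset X, #|H| == (2 ^ k)%N & H :&: N == 1]]|
    <= (2 ^ k * s_ (X / N) k)%N.
Proof.
move=> abX pX sNX cycN.
have nsNX : N <| X by rewrite -sub_abelian_normal.
have joinE : forall H : {group gT}, H \subset X -> H <*> N = H * N.
  move=> H sHX; apply: cent_joinEr.
  exact: subset_trans sNX (subset_trans abX (centS sHX)).
rewrite s_quotient //.
apply: (@card_fibers_le _ _ _ _ (fun H : {group gT} => (H <*> N)%G) (2 ^ k)%N).
  move=> H; rewrite !inE => /and3P[sHX /eqP oH /eqP tiHN] /=.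
  rewrite join_subG sHX sNX joing_subr /= joinE // TI_cardMg // oH.
  by rewrite eqxx.
move=> L; rewrite inE => /and3P[sLX sNL /eqP oL].
have -> : (2 ^ k)%N = #|L : N| by rewrite -divgS // oL mulnK.
apply: leq_trans (compl_bound (abelianS sLX abX) (pgroupS sLX pX) sNL cycN).
apply: subset_leq_card; apply/subsetP => H; rewrite !inE.
case/andP => /and3P[sHX _ ->] /eqP/(congr1 val) /= defL.
by rewrite -defL joing_subl -joinE // eqxx.
Qed.

Lemma pgroup_card2 (gT : finGroupType) (X : {group gT}) m :
  #|X| = (2 ^ m)%N -> 2.-group X.
Proof. by move=> oX; rewrite pgroupE oX pnatX pnat_id. Qed.

Lemma s_upper m : forall (gT : finGroupType) (X : {group gT}) k,
  abelian X -> #|X| = (2 ^ m)%N -> s_ X k <= gb m k.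
Proof.
elim: m => [|m IH] gT X k abX oX.
  case: k => [|k]; first by rewrite s_0.
  rewrite leqn0 cards_eq0; apply/eqP/setP => H; rewrite !inE.
  apply/negP => /andP[sHX /eqP oH]; have := subset_leq_card sHX.
  by rewrite oH oX expnS; have := expn_gt0 2 k; lia.
have pX := pgroup_card2 oX.
have [z Xz oz] : {z | z \in X & #[z] = 2}.
  by apply: Cauchy; rewrite // oX expnS dvdn_mulr.
case: k => [|j]; first by rewrite s_0.
have sZX : <[z]> \subset X by rewrite cycle_subG.
have nsZX : <[z]> <| X by rewrite -sub_abelian_normal.
have oZ : #|<[z]>| = 2 by rewrite -orderE.
have oXZ : #|X / <[z]>| = (2 ^ m)%N.
  rewrite card_quotient ?normal_norm // -divgS // oX oZ expnS.
  by rewrite mulKn.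
have abXZ := quotient_abelian <[z]> abX.
rewrite /s_ -(cardsID [set H : {group gT} | z \in H]) /= -/(s_ X j.+1).
apply: leq_add.
  apply: leq_trans (IH _ _ j abXZ oXZ); rewrite s_quotient // oZ -expnSr.
  apply: eq_leq; apply: eq_card => H; rewrite !inE cycle_subG.
  by case: (H \subset X); case: (z \in H); rewrite ?andbF // andbT.
apply: leq_trans (_ : (2 ^ j.+1 * s_ (X / <[z]>) j.+1)%N <= _); last first.
  by rewrite leq_mul2l IH ?orbT.
apply: leq_trans (c_bound j.+1 abX pX sZX (cycle_cyclic z)).
apply: subset_leq_card; apply/subsetP => H; rewrite !inE.
case/andP => /negbTE notzH /andP[-> ->] /=.
by rewrite setIC prime_TIg ?oZ // cycle_subG notzH.
Qed.

Lemma s_lower m : forall (gT : finGroupType) (X : {group gT}) k,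
  (2.-abelem X)%g -> #|X| = (2 ^ m)%N -> gb m k <= s_ X k.
Proof.
elim: m => [|m IH] gT X k abX oX.
  by case: k => [|k]; rewrite ?s_0.
have cXX : {in X &, forall u v, commute u v}.
  by move=> u v Xu Xv; apply: (centsP (abelem_abelian abX)).
have sq : {in X, forall x, x ^+ 2 = 1} by case/abelemP: abX.
have [a Xa oa] : {a | a \in X & #[a] = 2}.
  by apply: Cauchy; rewrite // oX expnS dvdn_mulr.
have sAX : <[a]> \subset X by rewrite cycle_subG.
have [X1 defX] := abelem_split_dprod abX sAX.
have [_ mulX cX1 tiaX1] := dprodP defX.
have sX1X : X1 \subset X by rewrite -mulX mulG_subr.
have oX1 : #|X1| = (2 ^ m)%N.
  have := dprod_card defX; rewrite -orderE oa oX expnS => /eqP.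
  by rewrite eqn_mul2l => /eqP.
have notaX1 : a \notin X1.
  apply/negP => X1a; have : a \in <[a]> :&: X1 by rewrite inE cycle_id.
  by rewrite tiaX1 => /set1gP a1; move: oa; rewrite a1 order1.
have abX1 := abelemS sX1X abX.
case: k => [|j]; first by rewrite s_0 gb_0.
rewrite gb_pascal2 /s_ -(cardsID [set H : {group gT} | H \subset X1]).
apply: leq_add.
  apply: leq_trans (IH _ _ j.+1 abX1 oX1) _; apply: eq_leq; apply: eq_card => H.
  rewrite !inE; case sHX1: (H \subset X1); rewrite ?andbF // andbT.
  by rewrite (subset_trans sHX1 sX1X).
apply: leq_trans (_ : (2 ^ (m - j) * s_ X1 j)%N <= _).
  by rewrite leq_mul2l IH ?orbT.
apply: (@card_fibers_ge _ _ _ _ (fun H : {group gT} => (H :&: X1)%G) (2 ^ (m - j))%N).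
move=> H0; rewrite inE => /andP[sH0X1 /eqP oH0].
have sH0X : H0 \subset X := subset_trans sH0X1 sX1X.
have ljm : j <= m.
  by have := subset_leq_card sH0X1; rewrite oH0 oX1 leq_exp2l.
have -> : (2 ^ (m - j))%N = #|rcosets H0 X1|.
  by rewrite -/(indexg X1 H0) -divgS // oX1 oH0 expnB.
have key : forall b, b \in X1 ->
    [/\ a * b \in X, a * b \notin X1, #|H0 <*> <[a * b]>| = (2 ^ j.+1)%N
      & (H0 <*> <[a * b]>) :&: X1 = H0].
  move=> b X1b; have Xb := subsetP sX1X b X1b.
  have Xc : a * b \in X by rewrite groupM.
  have notX1c : a * b \notin X1.
    by apply: contra notaX1 => X1c; rewrite -(mulgK b a) groupM ?groupV.
  have oc : #[a * b] = 2.
    apply: nt_prime_order => //; first exact: sq.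
    by apply: contraNneq notX1c => ->; rewrite group1.
  have joinE : H0 <*> <[a * b]> = H0 * <[a * b]>.
    apply: cent_joinEr; rewrite cycle_subG.
    exact: subsetP (subset_trans (abelem_abelian abX) (centS sH0X)) _ Xc.
  have tic : <[a * b]> :&: X1 = 1.
    by apply: prime_TIg; rewrite -?orderE ?oc // cycle_subG.
  split => //; rewrite joinE.
    rewrite TI_cardMg ?oH0 -?orderE ?oc ?expnSr //.
    by rewrite setIC; apply/trivgP; rewrite -tic setIS.
  by rewrite -group_modl // tic mulg1.
pose g (C : {set gT}) := (H0 <*> <[a * repr C]>)%G.
have reprP : forall C, C \in rcosets H0 X1 -> repr C \in X1 /\ C = H0 :* repr C.
  move=> C /rcosetsP[x X1x ->]; rewrite rcoset_repr; split => //.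
  have := mem_repr_rcoset H0 x; case/rcosetP => h H0h ->.
  by rewrite groupM // (subsetP sH0X1).
rewrite -(card_in_imset (f := g)); last first.
  move=> C1 C2 RC1 RC2 /(congr1 val) /= eqg.
  have [X1b1 defC1] := reprP C1 RC1; have [X1b2 defC2] := reprP C2 RC2.
  move: (repr C1) (repr C2) X1b1 X1b2 defC1 defC2 eqg => b1 b2 X1b1 X1b2 -> -> eqg.
  have [Xc1 _ _ defH1] := key b1 X1b1; have [Xc2 _ _ _] := key b2 X1b2.
  apply/rcoset_eqP; rewrite mem_rcoset -defH1 inE.
  rewrite (groupM X1b1) ?groupV // andbT.
  have Xb1 := subsetP sX1X b1 X1b1; have Xb2 := subsetP sX1X b2 X1b2.
  have -> : b1 * b2^-1 = (a * b1) * (a * b2)^-1.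
    by rewrite invMg !mulgA -(mulgA a b1) (cXX a) ?groupM ?groupV // mulgK.
  rewrite groupM ?groupV //; first by rewrite (subsetP (joing_subr _ _)) ?cycle_id.
  by rewrite /= eqg (subsetP (joing_subr _ _)) ?cycle_id.
apply: subset_leq_card; apply/subsetP => _ /imsetP[C RC ->].
have [X1b _] := reprP C RC; have [Xc notX1c oH defH] := key _ X1b.
rewrite !inE /= oH eqxx andbT; apply/andP; split; last first.
  by apply/eqP/group_inj; rewrite /= defH.
rewrite [_ \subset X]join_subG sH0X cycle_subG Xc !andbT.
apply: contra notX1c => sHX1; apply: (subsetP sHX1).
by rewrite (subsetP (joing_subr _ _)) ?cycle_id.
Qed.

Lemma G_bound (gT : finGroupType) (G : {group gT}) m j :
  #|G| = (2 ^ m.+2)%N -> abelian G -> ~~ (2.-abelem G)%g ->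
  s_ G j.+1 <= (gb m.+1 j + 2 ^ j.+1 * gb m j.+1)%N.
Proof.
move=> oG abG nabG; have pG := pgroup_card2 oG.
have [x Gx x2] : exists2 x, x \in G & x ^+ 2 != 1.
  apply/forall_inPn; apply: contra nabG => /forall_inP x2.
  by apply/abelemP => //; split => // y Gy; apply/eqP/x2.
have px : 2.-elt x := mem_p_elt pG Gx.
set e := logn 2 #[x].
have ox : #[x] = (2 ^ e)%N by rewrite orderE (card_pgroup px).
have le2e : 2 <= e.
  rewrite ltnNge; apply: contra x2 => le1; rewrite -order_dvdn ox.
  by rewrite -{2}(expn1 2) dvdn_exp2l.
set g := x ^+ (2 ^ (e - 2)).
have og : #[g] = 4.
  rewrite orderXdiv ox; last by rewrite dvdn_exp2l ?leq_subr.
  by rewrite -expnB ?leq_subr // subKn.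
set z := g ^+ 2.
have oz : #[z] = 2 by rewrite orderXdiv og.
have Gg : g \in G by rewrite groupX.
have Gz : z \in G by rewrite groupX.
have sZG : <[z]> \subset G by rewrite cycle_subG.
have sgG : <[g]> \subset G by rewrite cycle_subG.
have nsZG : <[z]> <| G by rewrite -sub_abelian_normal.
have nsgG : <[g]> <| G by rewrite -sub_abelian_normal.
have oZ : #|<[z]>| = 2 by rewrite -orderE.
have ogG : #|<[g]>| = 4 by rewrite -orderE.
rewrite /s_ -(cardsID [set H : {group gT} | z \in H]).
apply: leq_add.
  have oGZ : #|G / <[z]>| = (2 ^ m.+1)%N.
    rewrite card_quotient ?normal_norm // -divgS // oG oZ expnS.
    by rewrite mulKn.
  apply: leq_trans (s_upper j (quotient_abelian _ abG) oGZ).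
  rewrite s_quotient // oZ -expnSr.
  apply: eq_leq; apply: eq_card => H; rewrite !inE cycle_subG.
  by case: (H \subset G); case: (z \in H); rewrite ?andbF // andbT.
have oGg : #|G / <[g]>| = (2 ^ m)%N.
  rewrite card_quotient ?normal_norm // -divgS // oG ogG !expnS mulnA.
  by rewrite mulKn.
apply: leq_trans (_ : (2 ^ j.+1 * s_ (G / <[g]>) j.+1)%N <= _); last first.
  by rewrite leq_mul2l s_upper ?orbT // quotient_abelian.
apply: leq_trans (c_bound j.+1 abG pG sgG (cycle_cyclic g)).
apply: subset_leq_card; apply/subsetP => H; rewrite !inE.
case/andP => notzH /andP[-> ->] /=.
apply: contraR notzH => ntHg.
have := meet_Ohm1 ntHg.
rewrite (Ohm_p_cycle 1 (mem_p_elt pG Gg)) og.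
rewrite (_ : logn 2 4 = 2) // -/z => ntHz.
rewrite -cycle_subG; apply: contraR ntHz => notZH.
by rewrite setIC prime_TIg ?oZ.
Qed.

Lemma D_general (gT : finGroupType) (D A : {group gT}) (z : gT) m j :
  z \in A -> A \subset D -> #[z] = 2 -> <[z]> <| D ->
  (2.-abelem (D / <[z]>))%g -> #|D| = (2 ^ m.+3)%N ->
  (2.-abelem A)%g -> #|A| = (2 ^ m.+2)%N ->
  (gb m.+2 j + 2 ^ j.+1 * gb m.+1 j.+1)%N <= s_ D j.+1.
Proof.
move=> Az sAD oz nsZD abDZ oD abA oA.
have oZ : #|<[z]>| = 2 by rewrite -orderE.
have sZA : <[z]> \subset A by rewrite cycle_subG.
have nsZA : <[z]> <| A by rewrite -sub_abelian_normal // (abelem_abelian abA).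
rewrite /s_ -(cardsID [set H : {group gT} | z \in H]).
apply: leq_add.
  have oDZ : #|D / <[z]>| = (2 ^ m.+2)%N.
    rewrite card_quotient ?normal_norm // -divgS ?normal_sub // oD oZ expnS.
    by rewrite mulKn.
  apply: leq_trans (s_lower j abDZ oDZ) _.
  rewrite s_quotient // oZ -expnSr.
  apply: eq_leq; apply: eq_card => H; rewrite !inE cycle_subG.
  by case: (H \subset D); case: (z \in H); rewrite ?andbF // andbT.
set SA := [set H : {group gT} | (H \subset A) && (#|H| == (2 ^ j.+1)%N)].
set ZZ := [set H : {group gT} | z \in H].
apply: leq_trans (_ : #|SA :\: ZZ| <= _); last first.
  apply: subset_leq_card; apply: setSD; apply/subsetP => H; rewrite !inE.
  by case/andP => sHA ->; rewrite (subset_trans sHA sAD).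
have h1 : gb m.+2 j.+1 <= #|SA| := s_lower j.+1 abA oA.
have oAZ : #|A / <[z]>| = (2 ^ m.+1)%N.
  rewrite card_quotient ?normal_norm // -divgS // oA oZ expnS.
  by rewrite mulKn.
have h2 : #|SA :&: ZZ| <= gb m.+1 j.
  apply: leq_trans (s_upper j (quotient_abelian <[z]> (abelem_abelian abA)) oAZ).
  rewrite s_quotient // oZ -expnSr.
  apply: eq_leq; apply: eq_card => H; rewrite !inE cycle_subG.
  by case: (H \subset A); case: (z \in H); rewrite ?andbF // andbT.
have h3 := cardsID ZZ SA.
have e : gb m.+2 j.+1 = (gb m.+1 j + 2 ^ j.+1 * gb m.+1 j.+1)%N by [].
rewrite e in h1; lia.
Qed.


Lemma D8_facts : exists x y : 'D_8,
  [/\ #[x] = 4, y \notin <[x]>, 'Mho^1([set: 'D_8]) = <[x ^+ 2]>, x ^+ 2 \in 'Z([set: 'D_8])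
    & #|[set: 'D_8]| = 8] /\ #[y] = 2.
Proof.
have isoG : [set: 'D_8] \isog 'D_(2 ^ 3) by exact: isog_refl.
have [[x y] genG [oy xy]] := generators_2dihedral (G := [set: 'D_8]%G) (n := 3) isT isoG.
have [_ [_ _ _ _] [_ Mho] _ [Z _ _ _ _]] := @dihedral2_structure _ [set: 'D_8]%G 3 x y isT genG isoG.
case: genG => oG _ ox; rewrite inE => /andP[notXy _].
exists x, y; split => //; split => //.
  by rewrite Mho.
by rewrite Z cycle_id.
Qed.

Lemma expg_pair (T1 T2 : finGroupType) (d : T1 * T2) n : d ^+ n = (d.1 ^+ n, d.2 ^+ n).
Proof. by elim: n => [|n IH]; rewrite ?expg0 // !expgS IH. Qed.

Lemma rv2_sq m (e : 'rV['Z_2]_m) : e ^+ 2 = 1.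
Proof.
rewrite expgS expg1; apply/matrixP => i j; rewrite !mxE /=.
by rewrite GRing.addrr_pchar2.
Qed.

Lemma rv2_comm m (e1 e2 : 'rV['Z_2]_m) : commute e1 e2.
Proof. exact: GRing.addrC. Qed.

Lemma exp2_abelian (gT : finGroupType) (Q : {group gT}) :
  {in Q, forall q, q ^+ 2 = 1} -> abelian Q.
Proof.
move=> sq.
have inv : {in Q, forall q, q^-1 = q}.
  by move=> q Qq; apply/eqP; rewrite eq_invg_mul -(sq q Qq).
apply/centsP => a Qa b Qb.
by rewrite /commute -[a * b]inv ?groupM // invMg !inv.
Qed.

Lemma D_lower m j :
  (gb m.+2 j + 2 ^ j.+1 * gb m.+1 j.+1)%N <= s_ (D8xC2 m) j.+1.
Proof.
have [x [y [[ox notXy Mho Zx2 oD8] oy]]] := D8_facts.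
have [_ cx2] := centerP _ _ Zx2.
pose z : D8xC2_type m := (x ^+ 2, 1).
have x4 : x ^+ 2 ^+ 2 = 1 by rewrite -expgM; apply/eqP; rewrite -order_dvdn ox.
have x2n1 : x ^+ 2 != 1.
  by apply/eqP => /eqP; rewrite -order_dvdn ox.
have zc : forall d : D8xC2_type m, commute z d.
  move=> [d1 d2]; rewrite /commute /=; congr (_, _).
    by apply: cx2; rewrite inE.
  by rewrite mul1g mulg1.
have oz : #[z] = 2.
  apply: nt_prime_order => //; first by rewrite expg_pair /= x4 expg1n.
  by apply/eqP => /(congr1 fst) /= x21; rewrite x21 eqxx in x2n1.
have nsZD : <[z]> <| D8xC2 m.
  rewrite /normal subsetT /= cents_norm //; apply/subsetP => d _.
  by rewrite cent_cycle; apply/cent1P; rewrite /commute (zc d).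
have pD8 : (2.-group [set: 'D_8])%g := pgroup_card2 (m := 3) oD8.
have abDZ : (2.-abelem (D8xC2 m / <[z]>))%g.
  have sq : {in D8xC2 m / <[z]>, forall q, q ^+ 2 = 1}.
    move=> q /morphimP[d Nd _ ->]; rewrite -morphX //= coset_id //.
    rewrite expg_pair rv2_sq.
    have := Mho_p_elt 1 (in_setT d.1) (mem_p_elt pD8 (in_setT d.1)).
    rewrite expn1 Mho => /cycleP[i di].
    by apply/cycleP; exists i; rewrite expg_pair /= expg1n di.
  by apply/abelemP => //; split => //; apply: exp2_abelian.
have cardE : #|[set: 'rV['Z_2]_m]| = (2 ^ m)%N.
  by rewrite cardsT card_mx card_ord mul1n.
have oDD : #|D8xC2 m| = (2 ^ m.+3)%N.
  rewrite /= cardsT card_prod -cardsT oD8 -cardsT cardE.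
  by rewrite !expnS mulnA mulnA mulnC.
have cyC : <[y]> \subset 'C(<[x ^+ 2]>).
  rewrite cent_cycle cycle_subG; apply/cent1P; apply: commute_sym.
  by apply: cx2; rewrite inE.
pose V := (<[x ^+ 2]> <*> <[y]>)%G.
have VE : V :=: <[x ^+ 2]> * <[y]> := cent_joinEr cyC.
have ox2 : #[x ^+ 2] = 2 by rewrite orderXdiv ox.
have oV : #|V| = 4.
  rewrite VE TI_cardMg -?orderE ?ox2 ?oy //.
  rewrite setIC prime_TIg -?orderE ?oy // cycle_subG.
  apply: contra notXy; apply: subsetP; rewrite cycle_subG mem_cycle //.
have sqV : {in V, forall v, v ^+ 2 = 1}.
  move=> v; rewrite VE => /mulsgP[a b Aa Bb ->].
  rewrite expgMn; last by apply: commute_sym; apply: (centsP cyC).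
  have -> : a ^+ 2 = 1.
    by apply/eqP; rewrite -order_dvdn (dvdn_trans (order_dvdG Aa)) // -orderE ox2.
  have -> : b ^+ 2 = 1.
    by apply/eqP; rewrite -order_dvdn (dvdn_trans (order_dvdG Bb)) // -orderE oy.
  by rewrite mulg1.
pose A := setX_group V [set: 'rV['Z_2]_m]%G.
have sqA : {in A, forall a, a ^+ 2 = 1}.
  move=> [v e]; rewrite inE /= => /andP[Vv _].
  by rewrite expg_pair /= sqV // rv2_sq.
have abA : (2.-abelem A)%g.
  by apply/abelemP => //; split => //; apply: exp2_abelian.
have Az : z \in A.
  by rewrite inE /= in_setT andbT (subsetP (joing_subl _ _)) ?cycle_id.
have oA : #|A| = (2 ^ m.+2)%N.
  by rewrite /= cardsX oV cardE !expnS mulnA mulnC.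
exact: (D_general j Az (subsetT _) oz nsZD abDZ oDD abA oA).
Qed.

Local Close Scope group_scope.

Theorem lemma2p3 (gT : finGroupType) (G : {group gT}) (n : nat) :
  3 <= n -> #|G| = 2 ^ n -> abelian G -> ~~ (2.-abelem G)%g ->
  forall k, k <= n -> s_ G k <= s_ (D8xC2 (n - 3)) k.
Proof.
move=> n3 oG abG nabG [|j] _; first by rewrite !s_0.
have [m defn] : exists m, n = m.+3 by exists (n - 3); lia.
rewrite defn (_ : m.+3 - 3 = m); last by lia.
rewrite defn in oG.
exact: leq_trans (G_bound (m := m.+1) j oG abG nabG) (D_lower m j).
Qed.
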